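(* Let $\Gamma$ be a Veldkamp $n$-gon ($n\ge 2$). Then for every two edges $e_1,e_2$ of $\Gamma$ there exists an edge of $\Gamma$ that is opposite both $e_1$ and $e_2$. Consequently, for any two vertices $u,v$ with ${\rm dist}(u,v)$ even, $u^{\rm op}\cap v^{\rm op}\neq\emptyset$.
   Context: A graph is a pair $(V,E)$ with $E$ a set of $2$-element subsets of $V$; $\Gamma_v$ is the set of neighbors of $v$. An $s$-path is a sequence $(x_0,\dots,x_s)$ of vertices with consecutive vertices adjacent and $x_{i-2}\ne x_i$ for $i\in[2,s]$; ${\rm dist}$ is graph distance. A closed $s$-path is an $s$-path with $s\ge3$ whose first and last vertices coincide; an $s$-circuit is the subgraph determined by a closed $s$-path. An opposition relation on a set $X$ is a symmetric anti-reflexive relation; it is $k$-plump if for every $S\subseteq X$ with $|S|\le k$ some element of $X$ is related to all elements of $S$. A Veldkamp graph is a graph with a $2$-plump opposition relation $\equiv_v$ on $\Gamma_v$ for each vertex $v$. A path $(v_0,\dots,v_s)$ is straight if $v_{i-1}\equiv_{v_i}v_{i+1}$ for all $i\in[1,s-1]$; a circuit is straight if every path in it is straight. A Veldkamp $n$-gon ($n\ge2$) is a Veldkamp graph satisfying (VP1) connected and bipartite; (VP2) for each $k\in[1,n-1]$ each straight $k$-path is the unique straight path between its endpoints of length at most $k$; (VP3) every straight $(n+1)$-path lies in a straight $2n$-circuit. A root is a straight $n$-path. Two vertices $x,y$ are opposite if there is a root from $x$ to $y$; $x^{\rm op}$ denotes the set of vertices opposite $x$. Two edges $e,f$ are opposite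 if there is a straight $(n+1)$-path whose first edge is $e$ and whose last edge is $f$. *)

(* Defs.v *)
(* Sequences of vertices
   (x_0,...,x_s) are represented by a function p : nat -> V together with
   the length s (only p 0, ..., p s matter). *)
From Stdlib Require Import Arith List.
Import ListNotations.

Section Veldkamp.
Variable V : Type.
Variable adj : V -> V -> Prop.
(* opp v a b  means  a ≡_v b  (opposition relation on Γ_v) *)
Variable opp : V -> V -> V -> Prop.

Definition simple_graph : Prop :=
  (forall x y, adj x y -> adj y x) /\ (forall x, ~ adj x x).

Definition opposition_on_nbhd (v : V) : Prop :=
  (forall a b, opp v a b -> adj v a /\ adj v b) /\
  (forall a b, opp v a b -> opp v b a) /\
  (forall a, ~ opp v a a).

Definition plump (k : nat) (v : V) : Prop :=
  forall S : list V, length S <= k -> (forall a, In a S -> adj v a) ->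
    exists x, adj v x /\ forall a, In a S -> opp v x a.

Definition veldkamp_graph : Prop :=
  simple_graph /\ forall v, opposition_on_nbhd v /\ plump 2 v.

Definition walk (s : nat) (p : nat -> V) : Prop :=
  forall i, i < s -> adj (p i) (p (S i)).

Definition is_path (s : nat) (p : nat -> V) : Prop :=
  walk s p /\ forall i, 2 <= i <= s -> p (i - 2) <> p i.

Definition straight_cond (s : nat) (p : nat -> V) : Prop :=
  forall i, 1 <= i <= s - 1 -> opp (p i) (p (i - 1)) (p (S i)).

Definition straight_path (s : nat) (p : nat -> V) : Prop :=
  is_path s p /\ straight_cond s p.

Definition closed_path (m : nat) (c : nat -> V) : Prop :=
  is_path m c /\ 3 <= m /\ c 0 = c m.

Definition circ_vertex (m : nat) (c : nat -> V) (x : V) : Prop :=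
  exists i, i <= m /\ c i = x.
Definition circ_edge (m : nat) (c : nat -> V) (x y : V) : Prop :=
  exists i, i < m /\ ((c i = x /\ c (S i) = y) \/ (c i = y /\ c (S i) = x)).

Definition path_in_circuit (m : nat) (c : nat -> V) (s : nat) (p : nat -> V)
  : Prop :=
  (forall i, i <= s -> circ_vertex m c (p i)) /\
  (forall i, i < s -> circ_edge m c (p i) (p (S i))).

Definition straight_circuit (m : nat) (c : nat -> V) : Prop :=
  closed_path m c /\
  forall s p, is_path s p -> path_in_circuit m c s p -> straight_cond s p.

Definition connected : Prop :=
  forall u v, exists s p, walk s p /\ p 0 = u /\ p s = v.

Definition bipartite : Prop :=
  exists col : V -> bool, forall x y, adj x y -> col x <> col y.

Definition is_dist (u v : V) (d : nat) : Prop :=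
  (exists p, walk d p /\ p 0 = u /\ p d = v) /\
  (forall s p, walk s p -> p 0 = u -> p s = v -> d <= s).

Definition VP2 (n : nat) : Prop :=
  forall k, 1 <= k <= n - 1 ->
  forall p, straight_path k p ->
  forall j q, j <= k -> straight_path j q -> q 0 = p 0 -> q j = p k ->
    j = k /\ forall i, i <= k -> q i = p i.

Definition VP3 (n : nat) : Prop :=
  forall p, straight_path (S n) p ->
    exists c, straight_circuit (2 * n) c /\ path_in_circuit (2 * n) c (S n) p.

Definition veldkamp_ngon (n : nat) : Prop :=
  2 <= n /\ veldkamp_graph /\ connected /\ bipartite /\ VP2 n /\ VP3 n.

Definition opposite_vertices (n : nat) (x y : V) : Prop :=
  exists p, straight_path n p /\ p 0 = x /\ p n = y.

(* an edge is given by an (unordered) adjacent pair {a, b} *)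
Definition same_edge (a b x y : V) : Prop :=
  (a = x /\ b = y) \/ (a = y /\ b = x).

Definition opposite_edges (n : nat) (a b c d : V) : Prop :=
  exists p, straight_path (S n) p /\ same_edge a b (p 0) (p 1) /\
            same_edge c d (p n) (p (S n)).

End Veldkamp.

(* Main.v *)
Require Import Defs.
From Stdlib Require Import Arith Lia List.
Import ListNotations.

Section Pf.
Variable V : Type.
Variable adj : V -> V -> Prop.
Variable opp : V -> V -> V -> Prop.
Variable n : nat.
Hypothesis HV : veldkamp_ngon V adj opp n.

Lemma n2 : 2 <= n.
Proof. destruct HV; tauto. Qed.

Lemma adj_sym x y : adj x y -> adj y x.
Proof. destruct HV as [_ [[[Hs _] _] _]]. apply Hs. Qed.

Lemma adj_irr x : ~ adj x x.
Proof. destruct HV as [_ [[[_ Hi] _] _]]. apply Hi. Qed.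

Lemma opp_adj v a b : opp v a b -> adj v a /\ adj v b.
Proof. destruct HV as [_ [[_ Ho] _]]. destruct (Ho v) as [[H1 _] _]. apply H1. Qed.

Lemma opp_sym v a b : opp v a b -> opp v b a.
Proof. destruct HV as [_ [[_ Ho] _]]. destruct (Ho v) as [[_ [H1 _]] _]. apply H1. Qed.

Lemma opp_irr v a : ~ opp v a a.
Proof. destruct HV as [_ [[_ Ho] _]]. destruct (Ho v) as [[_ [_ H1]] _]. apply H1. Qed.

Lemma plump_2 v a b : adj v a -> adj v b -> exists x, adj v x /\ opp v x a /\ opp v x b.
Proof.
  intros Ha Hb. destruct HV as [_ [[_ Ho] _]]. destruct (Ho v) as [_ Hp].
  destruct (Hp [a; b]) as [x [Hx1 Hx2]]; simpl; auto.
  - intros y [<-|[<-|[]]]; auto.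
  - exists x; repeat split; auto; apply Hx2; simpl; auto.
Qed.

Lemma plump_0 v : exists x, adj v x.
Proof.
  destruct HV as [_ [[_ Ho] _]]. destruct (Ho v) as [_ Hp].
  destruct (Hp []) as [x [Hx1 _]]. simpl; lia. intros y []. exists x; auto.
Qed.

Definition ST (s : nat) (p : nat -> V) : Prop :=
  (forall i, i < s -> adj (p i) (p (S i))) /\
  (forall i, S i < s -> opp (p (S i)) (p i) (p (S (S i)))).

Lemma ST_nb s p : ST s p -> forall i, S (S i) <= s -> p i <> p (S (S i)).
Proof. intros [_ H2] i Hi E. apply (opp_irr (p (S i)) (p i)). rewrite E at 2. apply H2. lia. Qed.

Lemma ST_sp s p : ST s p -> straight_path V adj opp s p.
Proof.
  intros Hs. pose proof (ST_nb s p Hs) as Hnb. destruct Hs as [H1 H2].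
  split; [split|].
  - intros i Hi. apply H1; auto.
  - intros i Hi. replace i with (S (S (i-2))) at 2 by lia. apply Hnb. lia.
  - intros i Hi. replace i with (S (i - 1)) at 1 by lia. replace (S i) with (S (S (i-1))) by lia.
    apply H2. lia.
Qed.

Lemma sp_ST s p : straight_path V adj opp s p -> ST s p.
Proof.
  intros [[H1 _] H2]. split.
  - intros i Hi. apply H1; auto.
  - intros i Hi. specialize (H2 (S i)). replace (S i - 1) with i in H2 by lia. apply H2. lia.
Qed.

Lemma ST_shift s p k m : ST s p -> k + m <= s -> ST m (fun i => p (k + i)).
Proof.
  intros [H1 H2] Hk. split.
  - intros i Hi. rewrite <- plus_n_Sm. apply H1. lia.
  - intros i Hi. rewrite <- !plus_n_Sm. apply H2. lia.
Qed.

Lemma ST_rev s p : ST s p -> ST s (fun i => p (s - i)).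
Proof.
  intros [H1 H2]. split.
  - intros i Hi. replace (s - i) with (S (s - S i)) by lia. apply adj_sym, H1. lia.
  - intros i Hi. replace (s - i) with (S (S (s - S (S i)))) by lia.
    replace (s - S i) with (S (s - S (S i))) by lia. apply opp_sym, H2. lia.
Qed.

Definition pcons (a : V) (p : nat -> V) : nat -> V :=
  fun i => match i with 0 => a | S j => p j end.

Lemma ST_cons s p a : ST s p -> adj a (p 0) -> (1 <= s -> opp (p 0) a (p 1)) -> ST (S s) (pcons a p).
Proof.
  intros [H1 H2] Ha Ho. split.
  - intros [|i] Hi; simpl; auto. apply H1. lia.
  - intros [|i] Hi; simpl. apply Ho. lia. apply H2. lia.
Qed.

Definition psnoc (p : nat -> V) (s : nat) (x : V) : nat -> V :=
  fun i => if Nat.leb i s then p i else x.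

Lemma psnoc_le p s x i : i <= s -> psnoc p s x i = p i.
Proof. intros Hi. unfold psnoc. destruct (Nat.leb_spec i s); auto; lia. Qed.
Lemma psnoc_S p s x : psnoc p s x (S s) = x.
Proof. unfold psnoc. destruct (Nat.leb_spec (S s) s); auto; lia. Qed.

Lemma ST_snoc s p x : ST s p -> adj (p s) x -> (1 <= s -> opp (p s) (p (s-1)) x) -> ST (S s) (psnoc p s x).
Proof.
  intros [H1 H2] Ha Ho. split.
  - intros i Hi. destruct (Nat.eq_dec i s) as [->|Hne].
    + rewrite psnoc_S, psnoc_le by lia. auto.
    + rewrite !psnoc_le by lia. apply H1. lia.
  - intros i Hi. destruct (Nat.eq_dec (S i) s) as [E|Hne].
    + rewrite <- E at 3. rewrite psnoc_S, !psnoc_le by lia. subst s.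
      replace i with (S i - 1) at 2 by lia. apply Ho. lia.
    + rewrite !psnoc_le by lia. apply H2. lia.
Qed.

Lemma ext_path k : forall u, exists p, ST k p /\ p 0 = u.
Proof.
  induction k as [|k IH]; intros u.
  - exists (fun _ => u). split; [split; intros; lia|auto].
  - destruct (IH u) as [p [Hp Hu]]. destruct k as [|k].
    + destruct (plump_0 (p 0)) as [x Hx]. exists (psnoc p 0 x). split.
      * apply ST_snoc; auto. lia.
      * rewrite psnoc_le; auto.
    + assert (Ha : adj (p (S k)) (p k)) by (apply adj_sym, (proj1 Hp); lia).
      destruct (plump_2 _ _ _ Ha Ha) as [x [Hx [Ho _]]].
      exists (psnoc p (S k) x). split.
      * apply ST_snoc; auto. intros _. replace (S k - 1) with k by lia. apply opp_sym; auto.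
      * rewrite psnoc_le; auto. lia.
Qed.


Section Circ.
Variable c : nat -> V.
Hypothesis Hc : straight_circuit V adj opp (2*n) c.

Lemma c_walk i : i < 2*n -> adj (c i) (c (S i)).
Proof. destruct Hc as [[[Hw _] _] _]. apply Hw. Qed.
Lemma c_nb i : 2 <= i <= 2*n -> c (i-2) <> c i.
Proof. destruct Hc as [[[_ Hn] _] _]. apply Hn. Qed.
Lemma c_0 : c 0 = c (2*n).
Proof. destruct Hc as [[_ [_ H0]] _]. exact H0. Qed.
Lemma c_sc s q : is_path V adj s q -> path_in_circuit V (2*n) c s q -> ST s q.
Proof. intros H1 H2. destruct Hc as [_ Hs]. apply sp_ST. split; auto. Qed.

Lemma c_fwd s i : i + s <= 2*n -> ST s (fun t => c (i + t)).
Proof.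
  intros Hi. apply c_sc.
  - split.
    + intros t Ht. rewrite <- plus_n_Sm. apply c_walk. lia.
    + intros t Ht. replace (i + (t - 2)) with (i + t - 2) by lia. apply c_nb. lia.
  - split.
    + intros t Ht. exists (i + t). split; auto. lia.
    + intros t Ht. exists (i + t). split. lia. left. rewrite <- plus_n_Sm. auto.
Qed.

Lemma c_bwd s j : s <= j -> j <= 2*n -> ST s (fun t => c (j - t)).
Proof.
  intros H1 H2. apply c_sc.
  - split.
    + intros t Ht. replace (j - t) with (S (j - S t)) by lia. apply adj_sym, c_walk. lia.
    + intros t Ht. intro E. apply (c_nb (j - t + 2)). lia.
      replace (j - t + 2 - 2) with (j - t) by lia. replace (j - t + 2) with (j - (t-2)) by lia.
      auto.
  - split.
    + intros t Ht. exists (j - t). split; auto. lia.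
    + intros t Ht. exists (j - S t). split. lia. right. split; auto.
      f_equal; lia.
Qed.

Lemma c_distinct i j : i < j -> j < 2*n -> c i <> c j.
Proof.
  intros Hij Hj E. pose proof n2 as Hn2.
  destruct HV as [_ [_ [_ [_ [HVP2 _]]]]].
  assert (HL : j - i <= 2*n - 2 \/ (i = 0 /\ j = 2*n - 1)) by lia.
  destruct HL as [HL|[-> ->]].
  2:{ apply (adj_irr (c (2*n-1))). pose proof (c_walk (2*n-1)) as Hw.
      replace (S (2*n-1)) with (2*n) in Hw by lia. rewrite <- c_0, E in Hw. apply Hw. lia. }
  destruct (Nat.Even_or_Odd (j - i)) as [[m Hm]|[m Hm]].
  - assert (Hp : ST m (fun t => c (j - t))) by (apply c_bwd; lia).
    assert (Hq : ST m (fun t => c (i + t))) by (apply c_fwd; lia).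
    destruct (HVP2 m ltac:(lia) _ (ST_sp _ _ Hp) m _ (le_n m) (ST_sp _ _ Hq)) as [_ Heq].
    + simpl. rewrite Nat.add_0_r, Nat.sub_0_r. auto.
    + simpl. f_equal; lia.
    + specialize (Heq (m-1) ltac:(lia)). simpl in Heq.
      apply (c_nb (i + m + 1)). lia.
      replace (i + m + 1 - 2) with (i + (m - 1)) by lia. rewrite Heq. f_equal; lia.
  - assert (Hp : ST (S m) (fun t => c (j - t))) by (apply c_bwd; lia).
    assert (Hq : ST m (fun t => c (i + t))) by (apply c_fwd; lia).
    destruct (HVP2 (S m) ltac:(lia) _ (ST_sp _ _ Hp) m _ ltac:(lia) (ST_sp _ _ Hq)) as [Hc' _].
    + simpl. rewrite Nat.add_0_r, Nat.sub_0_r. auto.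
    + simpl. f_equal; lia.
    + lia.
Qed.

Definition g (t : nat) : V := c (t mod (2*n)).

Lemma mod_lt t : t mod (2*n) < 2*n.
Proof. pose proof n2. apply Nat.mod_upper_bound. lia. Qed.

Lemma g_S t : g (S t) = c (S (t mod (2*n))).
Proof.
  unfold g. pose proof n2. pose proof (mod_lt t) as Hr.
  replace (S t) with (t + 1) by lia. rewrite Nat.Div0.add_mod.
  rewrite (Nat.mod_small 1) by lia.
  destruct (Nat.eq_dec (S (t mod (2*n))) (2*n)) as [E|E].
  - replace (t mod (2*n) + 1) with (2*n) by lia. rewrite Nat.Div0.mod_same, E. apply c_0.
  - rewrite Nat.mod_small by lia. f_equal; lia.
Qed.

Lemma g_walk t : adj (g t) (g (S t)).
Proof. rewrite g_S. apply c_walk, mod_lt. Qed.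

Lemma g_inj a b : g a = g b -> a mod (2*n) = b mod (2*n).
Proof.
  intros E. unfold g in E. pose proof (mod_lt a). pose proof (mod_lt b).
  destruct (Nat.lt_trichotomy (a mod (2*n)) (b mod (2*n))) as [H1|[H1|H1]]; auto.
  - exfalso. apply (c_distinct _ _ H1); auto.
  - exfalso. apply (c_distinct _ _ H1); auto.
Qed.

Lemma mod_congr a b t : a mod (2*n) = b mod (2*n) -> (a + t) mod (2*n) = (b + t) mod (2*n).
Proof. intros E. rewrite (Nat.Div0.add_mod a), (Nat.Div0.add_mod b), E. auto. Qed.

Lemma mod_pred a b : (S a) mod (2*n) = (S b) mod (2*n) -> a mod (2*n) = b mod (2*n).
Proof.
  intros E. pose proof n2. apply (mod_congr _ _ (2*n - 1)) in E.
  replace (S a + (2*n-1)) with (a + 1 * (2*n)) in E by lia.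
  replace (S b + (2*n-1)) with (b + 1 * (2*n)) in E by lia.
  rewrite !Nat.Div0.mod_add in E. auto.
Qed.

Lemma g_mod a b : a mod (2*n) = b mod (2*n) -> g a = g b.
Proof. unfold g. intros ->. auto. Qed.

Lemma g_per t : g (t + 2*n) = g t.
Proof. apply g_mod. replace (t + 2*n) with (t + 1*(2*n)) by lia. apply Nat.Div0.mod_add. Qed.

Lemma g_nb t : g t <> g (S (S t)).
Proof.
  intros E. apply g_inj in E. pose proof n2.
  replace (S (S t)) with (t + 2) in E by lia. rewrite (Nat.Div0.add_mod t 2) in E.
  rewrite (Nat.mod_small 2) in E by lia. pose proof (mod_lt t).
  destruct (Nat.lt_ge_cases (t mod (2*n) + 2) (2*n)).
  - rewrite (Nat.mod_small (t mod (2*n) + 2)) in E by lia. lia.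
  - replace (t mod (2*n) + 2) with ((t mod (2*n) + 2 - 2*n) + 1 * (2*n)) in E by lia.
    rewrite Nat.Div0.mod_add, (Nat.mod_small (t mod (2*n) + 2 - 2*n)) in E by lia. lia.
Qed.

Lemma g_opp t : opp (g (S t)) (g t) (g (S (S t))).
Proof.
  assert (Hs : ST 2 (fun i => g (t + i))).
  { apply c_sc.
    - split.
      + intros i Hi. rewrite <- plus_n_Sm. apply g_walk.
      + intros i Hi. replace i with 2 by lia. simpl. rewrite Nat.add_0_r.
        replace (t + 2) with (S (S t)) by lia. apply g_nb.
    - split.
      + intros i Hi. exists ((t + i) mod (2*n)). split. pose proof (mod_lt (t+i)); lia. auto.
      + intros i Hi. exists ((t + i) mod (2*n)). split. apply mod_lt. left. split. auto.
        rewrite <- plus_n_Sm, g_S. auto. }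
  destruct Hs as [_ Hs]. specialize (Hs 0 ltac:(lia)). simpl in Hs.
  rewrite Nat.add_0_r, Nat.add_1_r, Nat.add_succ_r, Nat.add_1_r in Hs. exact Hs.
Qed.

Lemma circ_K P k0 : path_in_circuit V (2*n) c (S n) P -> ST (S n) P ->
  c k0 = P 0 -> c (S k0) = P 1 -> k0 < 2*n ->
  exists K, ST (S (2*n)) K /\ (forall j, j <= S n -> K j = P j) /\ K (2*n) = P 0 /\ K (S (2*n)) = P 1.
Proof.
  intros [Hv He] HP H0 H1 Hk.
  assert (Hg0 : g k0 = c k0) by (unfold g; rewrite Nat.mod_small; auto).
  assert (Hg1 : g (S k0) = c (S k0)) by (rewrite g_S, Nat.mod_small; auto).
  assert (Hloc : forall j, j <= n -> P j = g (k0 + j) /\ P (S j) = g (k0 + S j)).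
  { induction j as [|j IH]; intros Hj.
    - rewrite Nat.add_0_r, Nat.add_1_r. rewrite Hg0, Hg1. auto.
    - destruct IH as [IH1 IH2]. lia. split; auto.
      destruct (He (S j) ltac:(lia)) as [k [Hk' [[E1 E2]|[E1 E2]]]].
      + assert (Ek : g k = c k) by (unfold g; rewrite Nat.mod_small; auto).
        assert (Ek1 : g (S k) = c (S k)) by (rewrite g_S, Nat.mod_small; auto).
        rewrite <- E2, <- Ek1. apply g_mod. rewrite <- Ek, IH2 in E1.
        apply g_inj in E1.
        replace (S k) with (k + 1) by lia. replace (k0 + S (S j)) with (k0 + S j + 1) by lia.
        apply mod_congr. auto.
      + exfalso. assert (Ek : g k = c k) by (unfold g; rewrite Nat.mod_small; auto).
        assert (Ek1 : g (S k) = c (S k)) by (rewrite g_S, Nat.mod_small; auto).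
        rewrite <- Ek1, IH2 in E2. apply g_inj in E2.
        replace (k0 + S j) with (S (k0 + j)) in E2 by lia. apply mod_pred in E2.
        apply g_mod in E2. rewrite Ek, E1, <- IH1 in E2.
        apply (ST_nb _ _ HP j). lia. auto. }
  exists (fun i => g (k0 + i)). split; [split|split].
  - intros i Hi. rewrite <- plus_n_Sm. apply g_walk.
  - intros i Hi. rewrite <- !plus_n_Sm. apply g_opp.
  - intros j Hj. destruct j as [|j].
    + rewrite (proj1 (Hloc 0 ltac:(lia))). auto.
    + rewrite (proj2 (Hloc j ltac:(lia))). auto.
  - split.
    + replace (k0 + 2*n) with (k0 + 2*n) by lia. rewrite g_per, Hg0. auto.
    + replace (k0 + S (2*n)) with (S k0 + 2*n) by lia. rewrite g_per, Hg1. auto.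
Qed.

End Circ.


Lemma rev_circuit c : straight_circuit V adj opp (2*n) c ->
  straight_circuit V adj opp (2*n) (fun t => c (2*n - t)) /\
  (forall s q, path_in_circuit V (2*n) c s q -> path_in_circuit V (2*n) (fun t => c (2*n - t)) s q).
Proof.
  intros Hc. pose proof n2.
  assert (Hpc : forall s q, path_in_circuit V (2*n) (fun t => c (2*n - t)) s q -> path_in_circuit V (2*n) c s q).
  { intros s q [Hv He]. split.
    - intros i Hi. destruct (Hv i Hi) as [k [Hk E]]. exists (2*n - k). split. lia. auto.
    - intros i Hi. destruct (He i Hi) as [k [Hk [[E1 E2]|[E1 E2]]]]; exists (2*n - S k); split; try lia.
      + cbn beta in E1, E2. right. split. rewrite <- E2. f_equal; lia. rewrite <- E1. f_equal; lia.
      + cbn beta in E1, E2. left. split. rewrite <- E2. f_equal; lia. rewrite <- E1. f_equal; lia. }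
  split.
  - destruct Hc as [[[Hw Hnb] [H3 H0]] Hsc]. split; [split; [split|split]|].
    + intros t Ht. replace (2*n - t) with (S (2*n - S t)) by lia. apply adj_sym, Hw. lia.
    + intros t Ht E. apply (Hnb (2*n - t + 2)). lia.
      replace (2*n - t + 2 - 2) with (2*n - t) by lia. replace (2*n - t + 2) with (2*n - (t-2)) by lia.
      auto.
    + auto.
    + simpl. rewrite Nat.sub_diag, Nat.sub_0_r. auto.
    + intros s q Hq Hpq. apply Hsc; auto.
  - intros s q [Hv He]. split.
    + intros i Hi. destruct (Hv i Hi) as [k [Hk E]]. exists (2*n - k). split. lia. rewrite <- E. f_equal; lia.
    + intros i Hi. destruct (He i Hi) as [k [Hk [[E1 E2]|[E1 E2]]]]; exists (2*n - S k); split; try lia.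
      * right. split. rewrite <- E2. f_equal; lia. rewrite <- E1. f_equal; lia.
      * left. split. rewrite <- E2. f_equal; lia. rewrite <- E1. f_equal; lia.
Qed.

Lemma CL P : ST (S n) P ->
  exists K, ST (S (2*n)) K /\ (forall j, j <= S n -> K j = P j) /\ K (2*n) = P 0 /\ K (S (2*n)) = P 1.
Proof.
  intros HP. pose proof n2.
  destruct HV as [_ [_ [_ [_ [_ HVP3]]]]].
  destruct (HVP3 P (ST_sp _ _ HP)) as [c [Hc Hpc]].
  destruct Hpc as [Hv He] eqn:Epc.
  destruct (He 0 ltac:(lia)) as [k [Hk [[E1 E2]|[E1 E2]]]].
  - apply (circ_K c Hc P k); auto.
  - destruct (rev_circuit c Hc) as [Hc' Hp'].
    apply (circ_K _ Hc' P (2*n - S k)); auto.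
    + rewrite <- E2. f_equal; lia.
    + rewrite <- E1. f_equal; lia.
    + lia.
Qed.

Lemma OW P : ST (S n) P -> exists Y, ST n Y /\ Y 0 = P 1 /\ Y 1 = P 0 /\ Y n = P (S n).
Proof.
  intros HP. pose proof n2. destruct (CL P HP) as [K [HK [HKP [HK0 HK1]]]].
  exists (fun i => K (S n + (n - i))). split; [|split; [|split]].
  - apply (ST_rev n (fun i => K (S n + i))). apply (ST_shift _ _ _ _ HK). lia.
  - rewrite <- HK1. f_equal; lia.
  - rewrite <- HK0. f_equal; lia.
  - rewrite <- HKP by lia. f_equal; lia.
Qed.


Lemma rot R x y a : ST n R -> R 0 = x -> R n = y -> opp x (R 1) a ->
  exists R', ST n R' /\ R' 0 = x /\ R' 1 = a /\ R' n = y.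
Proof.
  intros HR H0 Hn Ho. pose proof n2.
  assert (HP : ST (S n) (pcons a R)).
  { apply ST_cons; auto.
    - rewrite H0. apply adj_sym. apply (opp_adj _ _ _ Ho).
    - intros _. rewrite H0. apply opp_sym; auto. }
  destruct (OW _ HP) as [Y [HY [HY0 [HY1 HYn]]]].
  exists Y. simpl in *. rewrite HY0, HY1, HYn. auto.
Qed.

Lemma lemO R x y a : ST n R -> R 0 = x -> R n = y -> adj x a ->
  exists R', ST n R' /\ R' 0 = x /\ R' 1 = a /\ R' n = y.
Proof.
  intros HR H0 Hn Ha. pose proof n2.
  assert (H1 : adj x (R 1)) by (rewrite <- H0; apply (proj1 HR); lia).
  destruct (plump_2 _ _ _ H1 Ha) as [c [Hc [Hc1 Hc2]]].
  destruct (rot R x y c HR H0 Hn (opp_sym _ _ _ Hc1)) as [R1 [HR1 [H10 [H11 H1n]]]].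
  apply (rot R1 x y a HR1 H10 H1n). rewrite H11. auto.
Qed.

Definition OV (u z : V) : Prop := exists R, ST n R /\ R 0 = u /\ R n = z.

Lemma merge m A B : 1 <= m -> ST m A -> ST m B -> A m = B m ->
  exists h, ST (S m) (psnoc A m h) /\ ST (S m) (psnoc B m h).
Proof.
  intros Hm HA HB E.
  assert (Ha : adj (A m) (A (m-1))) by (apply adj_sym; replace (A m) with (A (S (m-1))) by (f_equal; lia); apply (proj1 HA); lia).
  assert (Hb : adj (A m) (B (m-1))) by (rewrite E; apply adj_sym; replace (B m) with (B (S (m-1))) by (f_equal; lia); apply (proj1 HB); lia).
  destruct (plump_2 _ _ _ Ha Hb) as [h [Hh [H1 H2]]]. exists h. split.
  - apply ST_snoc; auto. intros _. apply opp_sym; auto.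
  - apply ST_snoc; auto. rewrite <- E. auto. intros _. rewrite <- E. apply opp_sym; auto.
Qed.

Lemma lemT u w c w' z : OV u z -> OV w z -> adj w c -> adj c w' -> opp c w w' ->
  exists z', OV u z' /\ OV w' z'.
Proof.
  intros [U [HU [HU0 HUn]]] [W0 [HW0 [HW00 HW0n]]] Hwc Hcw' Ho. pose proof n2.
  destruct (lemO W0 w z c HW0 HW00 HW0n Hwc) as [W [HW [HW0' [HW1 HWn]]]].
  assert (Hu1 : adj z (U (n-1))) by (rewrite <- HUn; apply adj_sym; replace (U n) with (U (S (n-1))) by (f_equal; lia); apply (proj1 HU); lia).
  assert (Hw1 : adj z (W (n-1))) by (rewrite <- HWn; apply adj_sym; replace (W n) with (W (S (n-1))) by (f_equal; lia); apply (proj1 HW); lia).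
  destruct (plump_2 _ _ _ Hu1 Hw1) as [h [Hh [Hh1 Hh2]]].
  assert (HPU : ST (S n) (psnoc U n h)).
  { apply ST_snoc; auto. rewrite HUn; auto. intros _. rewrite HUn. apply opp_sym; auto. }
  destruct (OW _ HPU) as [YU [HYU [_ [HYU1 HYUn]]]].
  rewrite psnoc_le in HYU1 by lia. rewrite psnoc_S in HYUn.
  assert (HPW : ST (S n) (psnoc W n h)).
  { apply ST_snoc; auto. rewrite HWn; auto. intros _. rewrite HWn. apply opp_sym; auto. }
  destruct (OW _ HPW) as [YW [HYW [HYW0 [HYW1 HYWn]]]].
  rewrite psnoc_le in HYW0, HYW1 by lia. rewrite psnoc_S in HYWn.
  assert (HX : ST (S n) (pcons w' YW)).
  { apply ST_cons; auto.
    - rewrite HYW0, HW1. apply adj_sym; auto.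
    - intros _. rewrite HYW0, HYW1, HW1, HW0'. apply opp_sym; auto. }
  destruct (OW _ HX) as [YX [HYX [_ [HYX1 HYXn]]]]. simpl in HYX1, HYXn.
  assert (HAU : ST (n-1) (fun i => YU (1 + i))) by (apply (ST_shift _ _ _ _ HYU); lia).
  assert (HAW : ST (n-1) (fun i => YX (1 + i))) by (apply (ST_shift _ _ _ _ HYX); lia).
  destruct (merge (n-1) _ _ ltac:(lia) HAU HAW) as [h' [H1 H2]].
  { simpl. replace (S (n-1)) with n by lia. rewrite HYUn, HYXn, HYWn. auto. }
  replace (S (n-1)) with n in H1, H2 by lia.
  exists h'. split.
  - exists (psnoc (fun i => YU (1 + i)) (n-1) h'). split; auto. split.
    + rewrite psnoc_le by lia. simpl. rewrite HYU1, HU0. auto.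
    + replace n with (S (n-1)) at 2 by lia. apply psnoc_S.
  - exists (psnoc (fun i => YX (1 + i)) (n-1) h'). split; auto. split.
    + rewrite psnoc_le by lia. simpl. auto.
    + replace n with (S (n-1)) at 2 by lia. apply psnoc_S.
Qed.

Lemma lemT2 u w c w' z : OV u z -> OV w z -> adj w c -> adj c w' ->
  exists z', OV u z' /\ OV w' z'.
Proof.
  intros Hu Hw Hwc Hcw'.
  destruct (plump_2 c w w' (adj_sym _ _ Hwc) Hcw') as [w'' [Hw'' [H1 H2]]].
  destruct (lemT u w c w'' z Hu Hw Hwc Hw'' (opp_sym _ _ _ H1)) as [z1 [Hz1 Hz2]].
  apply (lemT u w'' c w' z1 Hz1 Hz2 (adj_sym _ _ Hw'') Hcw' H2).
Qed.

Lemma R_walk m : forall p, walk V adj (2*m) p -> exists z, OV (p 0) z /\ OV (p (2*m)) z.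
Proof.
  induction m as [|m IH]; intros p Hp.
  - destruct (ext_path n (p 0)) as [R [HR H0]]. exists (R n). simpl.
    split; exists R; auto.
  - destruct (IH p) as [z [Hz1 Hz2]].
    { intros i Hi. apply Hp. lia. }
    destruct (lemT2 (p 0) (p (2*m)) (p (S (2*m))) (p (2 * S m)) z Hz1 Hz2) as [z' Hz'].
    + apply Hp. lia.
    + replace (2 * S m) with (S (S (2*m))) by lia. apply Hp. lia.
    + exists z'. auto.
Qed.

Lemma Fin a1 b1 x2 y2 z : adj a1 b1 -> adj x2 y2 -> OV a1 z -> OV x2 z ->
  exists f, adj z f /\
   (exists p, ST (S n) p /\ p 0 = a1 /\ p 1 = b1 /\ p n = z /\ p (S n) = f) /\
   (exists p, ST (S n) p /\ p 0 = x2 /\ p 1 = y2 /\ p n = z /\ p (S n) = f).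
Proof.
  intros H1 H2 [R1 [HR1 [HR10 HR1n]]] [R2 [HR2 [HR20 HR2n]]]. pose proof n2.
  destruct (lemO R1 a1 z b1 HR1 HR10 HR1n H1) as [P1 [HP1 [HP10 [HP11 HP1n]]]].
  destruct (lemO R2 x2 z y2 HR2 HR20 HR2n H2) as [P2 [HP2 [HP20 [HP21 HP2n]]]].
  destruct (merge n P1 P2 ltac:(lia) HP1 HP2 ltac:(congruence)) as [f [Hf1 Hf2]].
  exists f. split; [|split].
  - pose proof (proj1 Hf1 n ltac:(lia)) as Ha. rewrite psnoc_le, psnoc_S in Ha by lia.
    rewrite HP1n in Ha. exact Ha.
  - exists (psnoc P1 n f). split; [exact Hf1|]. rewrite !psnoc_le by lia.
    repeat split; auto. apply psnoc_S.
  - exists (psnoc P2 n f). split; [exact Hf2|]. rewrite !psnoc_le by lia.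
    repeat split; auto. apply psnoc_S.
Qed.

End Pf.

Theorem proposition2p12 (V : Type) (adj : V -> V -> Prop)
    (opp : V -> V -> V -> Prop) (n : nat) :
  veldkamp_ngon V adj opp n ->
  (forall a1 b1 a2 b2, adj a1 b1 -> adj a2 b2 ->
     exists c d, adj c d /\
       opposite_edges V adj opp n a1 b1 c d /\
       opposite_edges V adj opp n a2 b2 c d) /\
  (forall u v d, is_dist V adj u v d -> Nat.even d = true ->
     exists w, opposite_vertices V adj opp n u w /\
               opposite_vertices V adj opp n v w).
Proof.
  intros HV. split.
  - intros a1 b1 a2 b2 H1 H2.
    destruct HV as [Hn [Hg [Hconn Hrest]]] eqn:EHV.
    destruct (Hconn a1 a2) as [s [p [Hw [Hp0 Hps]]]].
    destruct (Nat.Even_or_Odd s) as [[m Hm]|[m Hm]].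
    + subst s. destruct (R_walk V adj opp n HV m p Hw) as [z [Hz1 Hz2]].
      rewrite Hp0 in Hz1. rewrite Hps in Hz2.
      destruct (Fin V adj opp n HV a1 b1 a2 b2 z H1 H2 Hz1 Hz2) as [f [Hf [[q1 [Hq1 [A1 [A2 [A3 A4]]]]] [q2 [Hq2 [B1 [B2 [B3 B4]]]]]]]].
      exists z, f. split; auto. split.
      * exists q1. split. apply (ST_sp V adj opp n HV); auto. split; left; auto.
      * exists q2. split. apply (ST_sp V adj opp n HV); auto. split; left; auto.
    + assert (Hw' : walk V adj (2 * (S m)) (psnoc V p s b2)).
      { intros i Hi. destruct (Nat.eq_dec i s) as [->|Hne].
        - rewrite psnoc_S, psnoc_le by lia. rewrite Hps. auto.
        - rewrite !psnoc_le by lia. apply Hw. lia. }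
      destruct (R_walk V adj opp n HV (S m) _ Hw') as [z [Hz1 Hz2]].
      rewrite psnoc_le, Hp0 in Hz1 by lia.
      replace (2 * S m) with (S s) in Hz2 by lia. rewrite psnoc_S in Hz2.
      destruct (Fin V adj opp n HV a1 b1 b2 a2 z H1 (adj_sym V adj opp n HV _ _ H2) Hz1 Hz2) as [f [Hf [[q1 [Hq1 [A1 [A2 [A3 A4]]]]] [q2 [Hq2 [B1 [B2 [B3 B4]]]]]]]].
      exists z, f. split; auto. split.
      * exists q1. split. apply (ST_sp V adj opp n HV); auto. split; left; auto.
      * exists q2. split. apply (ST_sp V adj opp n HV); auto. split. right; auto. left; auto.
  - intros u v d [[p [Hw [Hp0 Hpd]]] _] Hev.
    apply Nat.even_spec in Hev. destruct Hev as [m ->].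
    destruct (R_walk V adj opp n HV m p Hw) as [z [[R1 [HR1 [A1 A2]]] [R2 [HR2 [B1 B2]]]]].
    exists z. split.
    + exists R1. split. apply (ST_sp V adj opp n HV); auto. rewrite <- Hp0; auto.
    + exists R2. split. apply (ST_sp V adj opp n HV); auto. rewrite <- Hpd; auto.
Qed.
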